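(* Let $F:\mathbb{R}^k_+\to\mathbb{R}^k_+$ satisfy $\sup_{x\in\mathbb{R}^k_+}\|F(x)\|<\infty$. Let $M_0\in\{\{0\},\ \partial\mathbb{R}^k_+\}$ be absorbing for the nonlinear Poisson process $\{X^\varepsilon_t\}$ associated with $F$. Assume $F_i(x)>0$ for all $i$ and all $x\in\mathbb{R}^k_+\setminus M_0$. Then, for each $\varepsilon>0$, the process has at least one quasi-stationary distribution supported on $\varepsilon\mathbb{Z}^k_+\setminus M_0$. That is, there is a probability measure $\mu_\varepsilon$ on $\varepsilon\mathbb{Z}^k_+\setminus M_0$ and $\lambda_\varepsilon\in(0,1)$ with $\sum_{x}\mu_\varepsilon(x)p^\varepsilon(x,\Gamma)=\lambda_\varepsilon\mu_\varepsilon(\Gamma)$ for all $\Gamma\subset\varepsilon\mathbb{Z}^k_+\setminus M_0$.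
   Context: Let $\mathbb{R}^k_+=\{x\in\mathbb{R}^k:x_i\ge0\}$ and $\partial\mathbb{R}^k_+=\{x\in\mathbb{R}^k_+:\prod_ix_i=0\}$. For $y\in\mathbb{R}^k_+$, let $Z_1(y),Z_2(y),\dots$ be i.i.d. random vectors with independent components, the $i$-th component being Poisson distributed with mean $y_i$. Given $\varepsilon>0$ and $X^\varepsilon_0\in\varepsilon\mathbb{Z}^k_+$, the nonlinear Poisson process associated with $F$ is the Markov chain on $\varepsilon\mathbb{Z}^k_+$ defined by $X^\varepsilon_{t+1}=\varepsilon Z_{t+1}(F(X^\varepsilon_t)/\varepsilon)$ (independent Poisson draws at each step). Its transition kernel is $p^\varepsilon$. A set $M_0$ is absorbing if $p^\varepsilon(x,M_0)=1$ for $x\in M_0$. *)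

(* Defs.v *)
From Stdlib Require Import Reals.
From mathcomp Require Import all_boot.
Set Implicit Arguments. Unset Strict Implicit. Unset Printing Implicit Defensive.

Open Scope R_scope.

Definition vecR (k : nat) := 'I_k -> R.

Definition nonnegv (k : nat) (x : vecR k) : Prop := forall i, 0 <= x i.

Definition origin_set (k : nat) (x : vecR k) : Prop := forall i, x i = 0.
Definition boundary_set (k : nat) (x : vecR k) : Prop :=
  nonnegv x /\ \big[Rmult/1]_(i < k) x i = 0.

(* lattice index n in Z^k_+ ; the actual point is eps * n in eps Z^k_+ *)
Definition lat (k : nat) := {ffun 'I_k -> nat}.
Definition pos (k : nat) (eps : R) (n : lat k) : vecR k := fun i => eps * INR (n i).

Definition poisson_pmf (lam : R) (j : nat) : R := exp (- lam) * lam ^ j / INR (j`!).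

(* transition kernel p^eps(eps n, eps m) of the nonlinear Poisson process:
   X_{t+1} = eps * Z(F(X_t)/eps), independent Poisson components *)
Definition kernel (k : nat) (F : vecR k -> vecR k) (eps : R) (n m : lat k) : R :=
  \big[Rmult/1]_(i < k) poisson_pmf (F (pos eps n) i / eps) (m i).

(* has_sum P f s : the (unordered) sum of the nonnegative family f over the
   points satisfying P equals s, i.e. s is the supremum of finite partial sums. *)
Definition has_sum (T : eqType) (P : T -> Prop) (f : T -> R) (s : R) : Prop :=
  is_lub (fun r => exists l : seq T, uniq l /\ (forall y, y \in l -> P y) /\
                     r = \big[Rplus/0]_(y <- l) f y) s.

Definition absorbing (k : nat) (F : vecR k -> vecR k) (eps : R) (M0 : vecR k -> Prop) : Prop :=
  forall n : lat k, M0 (pos eps n) ->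
    has_sum (fun m => M0 (pos eps m)) (kernel F eps n) 1.

Definition is_QSD (k : nat) (F : vecR k -> vecR k) (eps : R) (M0 : vecR k -> Prop)
    (mu : lat k -> R) (lam : R) : Prop :=
  (forall n, 0 <= mu n) /\
  (forall n, M0 (pos eps n) -> mu n = 0) /\
  has_sum (fun _ => True) mu 1 /\
  0 < lam < 1 /\
  (forall Gamma : lat k -> Prop, (forall n, Gamma n -> ~ M0 (pos eps n)) ->
     exists (q : lat k -> R) (a b : R),
       (forall n, has_sum Gamma (kernel F eps n) (q n)) /\
       has_sum (fun _ => True) (fun n => mu n * q n) a /\
       has_sum Gamma mu b /\
       a = lam * b).

(* Main.v *)
From Pilot Require Import Defs.
From Stdlib Require Import Reals Lra Lia.
From Stdlib Require Import Classical ClassicalEpsilon.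
From HB Require Import structures.
From mathcomp Require Import all_boot.
Open Scope R_scope.

Set Implicit Arguments. Unset Strict Implicit. Unset Printing Implicit Defensive.

Lemma Rplus_assoc' : associative Rplus. Proof. by move=> *; rewrite Rplus_assoc. Qed.
Lemma Rmult_assoc' : associative Rmult. Proof. by move=> *; rewrite Rmult_assoc. Qed.
HB.instance Definition _ := Monoid.isComLaw.Build R 0 Rplus Rplus_assoc' Rplus_comm Rplus_0_l.
HB.instance Definition _ := Monoid.isComLaw.Build R 1 Rmult Rmult_assoc' Rmult_comm Rmult_1_l.
HB.instance Definition _ := Monoid.isMulLaw.Build R 0 Rmult Rmult_0_l Rmult_0_r.
HB.instance Definition _ := Monoid.isAddLaw.Build R Rmult Rplus Rmult_plus_distr_r Rmult_plus_distr_l.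

Notation SUM l f := (\big[Rplus/0]_(y <- l) f y).

Section Sums.
Variable T : eqType.
Implicit Types (l : seq T) (f g : T -> R).

Lemma sum_nonneg l f : (forall x, x \in l -> 0 <= f x) -> 0 <= SUM l f.
Proof.
elim: l => [|a l IH] H; rewrite ?big_nil ?big_cons; first lra.
have h1 := H a (mem_head _ _).
have h2 : 0 <= SUM l f by apply: IH => x hx; apply: H; rewrite inE hx orbT.
lra.
Qed.

Lemma sum_le l f g : (forall x, x \in l -> f x <= g x) -> SUM l f <= SUM l g.
Proof.
elim: l => [|a l IH] H; rewrite ?big_nil ?big_cons; first lra.
have h1 := H a (mem_head _ _).
have h2 : SUM l f <= SUM l g by apply: IH => x hx; apply: H; rewrite inE hx orbT.
lra.
Qed.

Lemma sum_scal l a f : SUM l (fun x => a * f x) = a * SUM l f.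
Proof. by rewrite (big_distrr (times := Rmult)). Qed.

Lemma sum_scalr l a f : SUM l (fun x => f x * a) = SUM l f * a.
Proof. by rewrite (big_distrl (times := Rmult)). Qed.

Lemma sum_add l f g : SUM l (fun x => f x + g x) = SUM l f + SUM l g.
Proof. by rewrite big_split. Qed.

Lemma sum_const0 l f : (forall x, x \in l -> f x = 0) -> SUM l f = 0.
Proof.
move=> H; rewrite (eq_big_seq (fun _ => 0)); last by move=> x /H.
by rewrite big1.
Qed.

Lemma sum_mono l1 l2 f : uniq l1 -> uniq l2 -> {subset l1 <= l2} ->
  (forall x, x \in l2 -> 0 <= f x) -> SUM l1 f <= SUM l2 f.
Proof.
elim: l1 l2 => [|a l IH] l2 u1 u2 sub H.
  by rewrite big_nil; apply: sum_nonneg.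
rewrite big_cons (big_rem a (sub a (mem_head _ _))) /=.
move: u1 => /= /andP [anl ul].
suff: SUM l f <= SUM (rem a l2) f by lra.
apply: IH => //; first exact: rem_uniq.
  move=> x hx; rewrite (mem_rem_uniq _ u2) inE; apply/andP; split.
    by apply/eqP => e; move: anl; rewrite -e hx.
  by apply: sub; rewrite inE hx orbT.
move=> x hx; apply: H; move: hx; rewrite (mem_rem_uniq _ u2) inE => /andP [] //.
Qed.

Lemma sum_split_pred l f (p : pred T) :
  SUM l f = SUM [seq x <- l | p x] f + SUM [seq x <- l | ~~ p x] f.
Proof. by rewrite !big_filter (bigID p). Qed.

Lemma sum_abs_le l f g e : (forall x, x \in l -> Rabs (f x - g x) <= e) ->
  Rabs (SUM l f - SUM l g) <= INR (size l) * e.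
Proof.
elim: l => [|a l IH] H.
  rewrite !big_nil Rminus_0_r Rabs_R0 /=; lra.
rewrite !big_cons (_ : INR (size (a::l)) = INR (size l) + 1); last by rewrite -S_INR.
have h1 := H a (mem_head _ _).
have h2 := IH (fun x hx => H x (ltac:(by rewrite inE hx orbT))).
have -> : f a + SUM l f - (g a + SUM l g) = (f a - g a) + (SUM l f - SUM l g) by ring.
apply: Rle_trans; first apply: Rabs_triang. lra.
Qed.

Lemma sum_delta l f x0 : uniq l -> x0 \in l ->
  SUM l (fun x => (if x == x0 then 1 else 0) * f x) = f x0.
Proof.
move=> u h; rewrite (big_rem x0 h) /= eqxx.
rewrite sum_const0; first lra.
move=> x; rewrite (mem_rem_uniq _ u) inE => /andP [/negbTE -> _]; lra.
Qed.

Variable P : T -> Prop.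

Definition okl l := uniq l /\ (forall y, y \in l -> P y).

Lemma hs_ub f s l : has_sum P f s -> uniq l -> (forall y, y \in l -> P y) -> SUM l f <= s.
Proof. move=> [H _] u hl; apply: H; by exists l. Qed.

Lemma hs_least f s M : has_sum P f s ->
  (forall l, uniq l -> (forall y, y \in l -> P y) -> SUM l f <= M) -> s <= M.
Proof. move=> [_ H] HM; apply: H => r [l [u [hl ->]]]; exact: HM. Qed.

Lemma hs_intro f s :
  (forall l, uniq l -> (forall y, y \in l -> P y) -> SUM l f <= s) ->
  (forall M, (forall l, uniq l -> (forall y, y \in l -> P y) -> SUM l f <= M) -> s <= M) ->
  has_sum P f s.
Proof.
move=> H1 H2; split.
  by move=> r [l [u [hl ->]]]; apply: H1.
by move=> M HM; apply: H2 => l u hl; apply: HM; exists l.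
Qed.

Lemma hs_exists f M :
  (forall l, uniq l -> (forall y, y \in l -> P y) -> SUM l f <= M) ->
  exists s, has_sum P f s /\ s <= M.
Proof.
move=> H.
have hb : bound (fun r => exists l : seq T, uniq l /\ (forall y, y \in l -> P y) /\
                     r = SUM l f).
  by exists M => r [l [u [hl ->]]]; apply: H.
have hne : exists r, (fun r => exists l : seq T, uniq l /\ (forall y, y \in l -> P y) /\
                     r = SUM l f) r.
  by exists 0, [::]; rewrite big_nil; split => //.
case: (completeness _ hb hne) => s hs.
exists s; split => //.
by apply: (proj2 hs) => r [l [u [hl ->]]]; apply: H.
Qed.

Lemma hs_nonneg f s : has_sum P f s -> 0 <= s.
Proof. move=> h; have := hs_ub h (l:=[::]) isT; rewrite big_nil; apply => //. Qed.

Lemma hs_approx f s e : has_sum P f s -> 0 < e ->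
  exists l, uniq l /\ (forall y, y \in l -> P y) /\ s - e < SUM l f.
Proof.
move=> h he; apply: NNPP => hn.
have : s <= s - e; last lra.
apply: (hs_least h) => l u hl.
apply: Rnot_lt_le => hlt; apply: hn; by exists l.
Qed.

Lemma hs_tail f s e : has_sum P f s -> (forall x, 0 <= f x) -> 0 < e ->
  exists K, uniq K /\ (forall y, y \in K -> P y) /\
   forall l, uniq l -> (forall y, y \in l -> P y) -> (forall y, y \in l -> y \notin K) ->
     SUM l f <= e.
Proof.
move=> h f0 he; case: (hs_approx h he) => K [uK [hK hs]].
exists K; split => //; split => // l ul hl hd.
have : SUM (K ++ l) f <= s.
  apply: (hs_ub h).
    rewrite cat_uniq uK ul andbT /=; apply/hasPn => y /hd //.
  by move=> y; rewrite mem_cat => /orP [/hK|/hl].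
rewrite big_cat /=; lra.
Qed.

Lemma hs_scale f s a : 0 <= a -> has_sum P f s -> has_sum P (fun x => a * f x) (a * s).
Proof.
move=> ha h; case: (Req_dec a 0) => [->|anz].
  apply: hs_intro.
    by move=> l _ _; rewrite sum_const0 => [|x _]; lra.
  by move=> M HM; have := HM [::] isT (fun y (hy : y \in [::]) => ltac:(done)); rewrite big_nil; lra.
have apos : 0 < a by lra.
apply: hs_intro.
  move=> l u hl; rewrite sum_scal; apply: Rmult_le_compat_l => //; exact: hs_ub.
move=> M HM.
have : s <= M / a.
  apply: (hs_least h) => l u hl.
  have := HM l u hl; rewrite sum_scal => hh.
  apply (Rmult_le_reg_l a) => //. field_simplify; lra.
move=> hh. have := Rmult_le_compat_l a _ _ (Rlt_le _ _ apos) hh.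
have -> : a * (M / a) = M by field; lra.
done.
Qed.

Lemma hs_unique f s1 s2 : has_sum P f s1 -> has_sum P f s2 -> s1 = s2.
Proof.
move=> h1 h2; apply: Rle_antisym.
  by apply: (hs_least h1) => l u hl; apply: hs_ub h2 u hl.
by apply: (hs_least h2) => l u hl; apply: hs_ub h1 u hl.
Qed.

End Sums.

Lemma fub_aux (T : eqType) (P1 P2 : T -> Prop) (f : T -> T -> R) (r : T -> R) :
  (forall x y, 0 <= f x y) ->
  (forall x, P1 x -> has_sum P2 (f x) (r x)) ->
  forall l M, uniq l -> (forall x, x \in l -> P1 x) ->
   (forall l', uniq l' -> (forall y, y \in l' -> P2 y) ->
       SUM l (fun x => SUM l' (f x)) <= M) ->
   SUM l r <= M.
Proof.
move=> f0 hr; elim => [|a l IH] M ul hl H.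
  have := H [::] isT (fun y (hy: y \in [::]) => ltac:(done)).
  by rewrite !big_nil.
rewrite big_cons.
move: ul => /= /andP [anl ul].
suff : r a <= M - SUM l r by lra.
apply: (hs_least (hr a (hl a (mem_head _ _)))) => l' u' hl'.
suff : SUM l r <= M - SUM l' (f a) by lra.
apply: IH => //; first by move=> x hx; apply: hl; rewrite inE hx orbT.
move=> l'' u'' hl''.
set l3 := undup (l' ++ l'').
have u3 : uniq l3 by apply: undup_uniq.
have h3 : forall y, y \in l3 -> P2 y.
  by move=> y; rewrite mem_undup mem_cat => /orP [/hl'|/hl''].
have := H l3 u3 h3. rewrite big_cons.
have e1 : SUM l' (f a) <= SUM l3 (f a).
  apply: sum_mono => //.
  by move=> y hy; rewrite mem_undup mem_cat hy.
have e2 : SUM l (fun x => SUM l'' (f x)) <= SUM l (fun x => SUM l3 (f x)).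
  apply: sum_le => x _; apply: sum_mono => //.
  by move=> y hy; rewrite mem_undup mem_cat hy orbT.
lra.
Qed.

Lemma fubini (T : eqType) (P1 P2 : T -> Prop) (f : T -> T -> R) (r c : T -> R) C :
  (forall x y, 0 <= f x y) ->
  (forall x, P1 x -> has_sum P2 (f x) (r x)) ->
  (forall y, P2 y -> has_sum P1 (fun x => f x y) (c y)) ->
  has_sum P2 c C -> has_sum P1 r C.
Proof.
move=> f0 hr hc hC; apply: hs_intro.
  move=> l u hl; apply: (fub_aux f0 hr) => // l' u' hl'.
  rewrite exchange_big /=.
  apply: Rle_trans; last by apply: (hs_ub hC u' hl').
  apply: sum_le => y hy; exact: (hs_ub (hc y (hl' y hy)) u hl).
move=> M HM; apply: (hs_least hC) => l' u' hl'.
apply: (@fub_aux T P2 P1 (fun y x => f x y) c) => //.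
move=> l u hl; rewrite exchange_big /=.
apply: Rle_trans; last by apply: (HM l u hl).
apply: sum_le => x hx; exact: (hs_ub (hr x (hl x hx)) u' hl').
Qed.

Section Cluster.
Variable f : nat -> nat -> R.
Variable K : nat -> R.
Hypothesis hf : forall N m, 0 <= f N m <= K m.

Definition close (pre : nat -> R) M d N :=
  forall m, (m < M)%nat -> Rabs (f N m - pre m) < d.

Definition Tset (pre : nat -> R) M := fun r : R => r <= 0 \/
  (forall d, 0 < d -> forall n0, exists N, (n0 <= N)%nat /\ close pre M d N /\ r <= f N M).

Lemma Tset_bound pre M : bound (Tset pre M).
Proof.
exists (K M) => r [h|h].
  have := hf 0 M; lra.
case: (h 1 Rlt_0_1 0%nat) => N [_ [_ hr]]; have := hf N M; lra.
Qed.

Lemma Tset_ne pre M : exists r, Tset pre M r.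
Proof. by exists 0; left; lra. Qed.

Definition step pre M : R := proj1_sig (completeness _ (Tset_bound pre M) (Tset_ne pre M)).

Lemma step_lub pre M : is_lub (Tset pre M) (step pre M).
Proof. exact: proj2_sig (completeness _ (Tset_bound pre M) (Tset_ne pre M)). Qed.

Fixpoint pre (M : nat) : nat -> R :=
  match M with
  | 0%nat => fun _ => 0
  | S M' => fun m => if (m < M')%nat then pre M' m else step (pre M') M'
  end.

Definition lim_c (m : nat) : R := pre (S m) m.

Lemma pre_stable M m : (m < M)%nat -> pre M m = lim_c m.
Proof.
elim: M => [//|M IH] hm /=.
case: ltnP => h; first exact: IH.
have -> : m = M by apply/eqP; rewrite eqn_leq h andbT -ltnS.
by rewrite /lim_c /= ltnn.
Qed.

Lemma close_pre M d N : close (pre M) M d N <-> close lim_c M d N.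
Proof.
split => h m hm; [rewrite -(pre_stable hm) | rewrite (pre_stable hm)]; exact: h.
Qed.

Lemma cluster_inv M : forall d, 0 < d -> forall n0, exists N, (n0 <= N)%nat /\ close lim_c M d N.
Proof.
elim: M => [|M IH] d hd n0.
  by exists n0; split => // m.
set L := step (pre M) M.
have hL : is_lub (Tset (pre M) M) L by apply: step_lub.
have hd2 : 0 < d / 2 by lra.
have [d1 [hd1 [n1 H1]]] : exists d1, 0 < d1 /\ exists n1, forall N, (n1 <= N)%nat ->
    close (pre M) M d1 N -> f N M < L + d / 2.
  apply: NNPP => hn.
  have : L + d / 2 <= L; last lra.
  apply: (proj1 hL); right => d1 hd1 n1.
  apply: NNPP => hn2; apply: hn; exists d1; split => //; exists n1 => N hN hc.
  apply: Rnot_le_lt => hle; apply: hn2; by exists N.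
have [r [hrT hr]] : exists r, Tset (pre M) M r /\ L - d / 2 < r.
  apply: NNPP => hn.
  have : L <= L - d / 2; last lra.
  apply: (proj2 hL) => r hr; apply: Rnot_lt_le => hlt; apply: hn; by exists r.
set d' := Rmin d d1.
have hd' : 0 < d' by apply: Rmin_pos.
have hd'd : d' <= d by apply: Rmin_l.
have hd'd1 : d' <= d1 by apply: Rmin_r.
have [N [hN [hc hf1]]] : exists N, (maxn n0 n1 <= N)%nat /\ close lim_c M d' N /\ L - d / 2 < f N M.
  case: hrT => [hr0|hT].
    case: (IH d' hd' (maxn n0 n1)) => N [hN hc]; exists N; split => //; split => //.
    have := hf N M; lra.
  case: (hT d' hd' (maxn n0 n1)) => N [hN [hc hrf]]; exists N; split => //; split.
    by apply/close_pre.
  lra.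
have hf2 : f N M < L + d / 2.
  apply: H1; first by apply: leq_trans hN; apply: leq_maxr.
  apply/close_pre => m hm; have := hc m hm; lra.
exists N; split; first by apply: leq_trans hN; apply: leq_maxl.
move=> m; rewrite ltnS leq_eqVlt => /orP [/eqP ->|hm].
  rewrite /lim_c /= ltnn -/L; apply: Rabs_def1; lra.
have := hc m hm; lra.
Qed.

Lemma cluster : exists l : nat -> R, forall M d, 0 < d -> forall n0, exists N,
  (n0 <= N)%nat /\ forall m, (m < M)%nat -> Rabs (f N m - l m) < d.
Proof. exists lim_c => M d hd n0; exact: cluster_inv. Qed.
End Cluster.

Lemma list_min (A : eqType) (l : seq A) (P : A -> R -> Prop) :
  (forall a r r', 0 < r' <= r -> P a r -> P a r') ->
  (forall a, a \in l -> exists r, 0 < r /\ P a r) ->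
  exists r, 0 < r /\ forall a, a \in l -> P a r.
Proof.
move=> Pm; elim: l => [|a l IH] H.
  by exists 1; split => //; lra.
case: (H a (mem_head _ _)) => r1 [hr1 P1].
case: IH => [b hb|r2 [hr2 P2]]; first by apply: H; rewrite inE hb orbT.
exists (Rmin r1 r2); split; first exact: Rmin_pos.
move=> x; rewrite inE => /orP [/eqP ->|hx].
  apply: Pm P1; split; [exact: Rmin_pos | exact: Rmin_l].
apply: Pm (P2 x hx); split; [exact: Rmin_pos | exact: Rmin_r].
Qed.

Lemma sum_ge_one (T : eqType) (l : seq T) f a : a \in l -> (forall x, x \in l -> 0 <= f x) ->
  f a <= SUM l f.
Proof.
move=> ha H; rewrite (big_rem a ha) /=.
have : 0 <= SUM (rem a l) f.
  apply: sum_nonneg => x hx; apply: H; exact: (mem_rem hx).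
lra.
Qed.

Lemma arch_le d M : (forall k : nat, INR k * d <= M) -> d <= 0.
Proof.
move=> H; apply: Rnot_lt_le => hd.
case: (INR_unbounded (M / d)) => k hk.
have := H k.
have : M < INR k * d.
  have -> : M = (M / d) * d by field; lra.
  apply: Rmult_lt_compat_r => //; lra.
lra.
Qed.

Lemma sum_ord_const n c : \big[Rplus/0]_(k < n) c = INR n * c.
Proof.
elim: n => [|n IH]; first by rewrite big_ord0 /=; ring.
by rewrite big_ord_recr IH S_INR Rmult_plus_distr_r Rmult_1_l.
Qed.


Lemma ln_le' x y : 0 < x -> x <= y -> ln x <= ln y.
Proof. move=> hx [h|->]; [left; exact: ln_increasing _ _ hx h | lra]. Qed.

Lemma ln_le_inv x y : 0 < x -> 0 < y -> ln x <= ln y -> x <= y.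
Proof. move=> hx hy h; apply: Rnot_lt_le => hlt; have := ln_increasing _ _ hy hlt; lra. Qed.

Lemma exp_le' x y : x <= y -> exp x <= exp y.
Proof. move=> h; apply: ln_le_inv; try exact: exp_pos; by rewrite !ln_exp. Qed.

Lemma div_cross X Y p q : 0 < p -> 0 < q -> q * X <= p * Y -> X / p <= Y / q.
Proof.
move=> hp hq h.
have -> : X / p = (q * X) / (p * q) by field; lra.
have -> : Y / q = (p * Y) / (p * q) by field; lra.
apply: Rmult_le_compat_r => //; left; apply: Rinv_0_lt_compat; nra.
Qed.

Section Finite.
Variables (T : eqType) (Sl : seq T) (x0 : T) (Q : T -> T -> R) (G : T -> R) (th : R).
Hypotheses (uS : uniq Sl) (x0S : x0 \in Sl)
  (Qpos : forall x y, x \in Sl -> y \in Sl -> 0 < Q x y)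
  (Qnn : forall x y, 0 <= Q x y)
  (QG : forall x y, x \in Sl -> Q x y <= G y)
  (G0 : 0 < G x0)
  (Qsum : forall x, x \in Sl -> SUM Sl (Q x) <= 1 - th)
  (thpos : 0 < th).

Fixpoint Rr (l : nat) (x : T) : R :=
  match l with 0%nat => 1 | S l' => SUM Sl (fun u => Q x u * Rr l' u) end.

Fixpoint pw (v : T -> R) (k : nat) (y : T) : R :=
  match k with 0%nat => v y | S k' => SUM Sl (fun x => pw v k' x * Q x y) end.

Definition dl (y : T) : R := if y == x0 then 1 else 0.

Lemma pw_nn v k y : (forall y, 0 <= v y) -> 0 <= pw v k y.
Proof.
move=> hv; elim: k y => [|k IH] y //=.
apply: sum_nonneg => x _; apply: Rmult_le_pos => //.
Qed.

Lemma pw_add v k l y : pw v (k + l) y = pw (pw v k) l y.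
Proof.
elim: l y => [|l IH] y; first by rewrite addn0.
rewrite addnS /=; apply: eq_bigr => x _; by rewrite IH.
Qed.

Lemma massR l : forall v, SUM Sl (pw v l) = SUM Sl (fun x => v x * Rr l x).
Proof.
elim: l => [|l IH] v.
  by apply: eq_bigr => x _ /=; rewrite Rmult_1_r.
have e : forall y, pw v l.+1 y = pw (pw v 1) l y by move=> y; rewrite -pw_add add1n.
rewrite (eq_bigr _ (fun y _ => e y)) IH /=.
rewrite (eq_bigr (fun x => SUM Sl (fun u => v u * Q u x * Rr l x))); last first.
  by move=> x _; rewrite -sum_scalr.
rewrite exchange_big /=; apply: eq_bigr => u _.
rewrite -sum_scal; apply: eq_bigr => x _; ring.
Qed.

Lemma one_m_th : 0 < 1 - th.
Proof.
have := Qsum x0S; have := @sum_ge_one _ Sl (Q x0) x0 x0S (fun x _ => Qnn x0 x).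
have := Qpos x0S x0S; lra.
Qed.

Lemma Rr_nn l x : 0 <= Rr l x.
Proof.
elim: l x => [|l IH] x /=; first lra.
apply: sum_nonneg => u _; apply: Rmult_le_pos => //.
Qed.

Lemma Rr_pos l x : x \in Sl -> 0 < Rr l x.
Proof.
move=> hx; case: l => [|l] /=; first lra.
apply: Rlt_le_trans (sum_ge_one (f := fun u => Q x u * Rr l u) x0S _).
  apply: Rmult_lt_0_compat; first exact: Qpos.
  elim: l {hx} => [|l IH] /=; first lra.
  apply: Rlt_le_trans (sum_ge_one (f := fun u => Q x0 u * Rr l u) x0S _).
    apply: Rmult_lt_0_compat => //; exact: Qpos.
  move=> u _; apply: Rmult_le_pos => //; exact: Rr_nn.
move=> u _; apply: Rmult_le_pos => //; exact: Rr_nn.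
Qed.

Lemma Rr_ub l x : x \in Sl -> Rr l x <= (1 - th) ^ l.
Proof.
elim: l x => [|l IH] x hx /=; first lra.
have hp := pow_le _ l (Rlt_le _ _ one_m_th).
apply: Rle_trans (sum_le (g := fun u => Q x u * (1 - th) ^ l) _) _.
  move=> u hu; apply: Rmult_le_compat_l => //; exact: IH.
rewrite sum_scalr; apply: Rmult_le_compat_r => //; exact: Qsum.
Qed.

Lemma Rr_lb l : (Q x0 x0) ^ l <= Rr l x0.
Proof.
elim: l => [|l IH] /=; first lra.
apply: Rle_trans (sum_ge_one (f := fun u => Q x0 u * Rr l u) x0S _).
  apply: Rmult_le_compat_l => //.
move=> u _; apply: Rmult_le_pos => //; exact: Rr_nn.
Qed.

Lemma ratios : exists a b, 0 < a /\ a <= 1 /\ 1 <= b /\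
  forall l x, x \in Sl -> a * Rr l x0 <= Rr l x <= b * Rr l x0.
Proof.
have [al [hal Hal]] : exists al, 0 < al /\ forall x, x \in Sl -> forall u, u \in Sl ->
    al * Q x0 u <= Q x u.
  apply: list_min.
    move=> x r r' hr H u hu; apply: Rle_trans (H u hu).
    apply: Rmult_le_compat_r => //; lra.
  move=> x hx; apply: list_min.
    move=> u r r' hr H; apply: Rle_trans H; apply: Rmult_le_compat_r => //; lra.
  move=> u hu; exists (Q x u / Q x0 u); split.
    apply: Rdiv_lt_0_compat; exact: Qpos.
  have := Qpos x0S hu; move=> h; right; field; lra.
have [be [hbe Hbe]] : exists be, 0 < be /\ forall x, x \in Sl -> forall u, u \in Sl ->
    be * Q x u <= Q x0 u.
  apply: list_min.
    move=> x r r' hr H u hu; apply: Rle_trans (H u hu).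
    apply: Rmult_le_compat_r => //; lra.
  move=> x hx; apply: list_min.
    move=> u r r' hr H; apply: Rle_trans H; apply: Rmult_le_compat_r => //; lra.
  move=> u hu; exists (Q x0 u / Q x u); split.
    apply: Rdiv_lt_0_compat; exact: Qpos.
  have := Qpos hx hu; move=> h; right; field; lra.
exists (Rmin 1 al), (Rmax 1 (/ be)); split; first by apply: Rmin_pos; lra.
split; first exact: Rmin_l. split; first exact: Rmax_l.
move=> [|l] x hx /=.
  have := Rmin_l 1 al; have := Rmax_l 1 (/ be); lra.
split.
  apply: Rle_trans (_ : al * SUM Sl (fun u => Q x0 u * Rr l u) <= _).
    apply: Rmult_le_compat_r; first by apply: sum_nonneg => u _; apply: Rmult_le_pos => //; exact: Rr_nn.
    exact: Rmin_r.
  rewrite -sum_scal; apply: sum_le => u hu.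
  rewrite -Rmult_assoc; apply: Rmult_le_compat_r; [exact: Rr_nn | exact: Hal].
apply: Rle_trans (_ : / be * SUM Sl (fun u => Q x0 u * Rr l u) <= _); last first.
  apply: Rmult_le_compat_r; first by apply: sum_nonneg => u _; apply: Rmult_le_pos => //; exact: Rr_nn.
  exact: Rmax_r.
rewrite -sum_scal; apply: sum_le => u hu.
rewrite -Rmult_assoc; apply: Rmult_le_compat_r; first exact: Rr_nn.
have := Hbe x hx u hu; have := Rinv_0_lt_compat _ hbe => hi h.
apply: Rle_trans (_ : / be * (be * Q x u) <= _); last by apply: Rmult_le_compat_l; lra.
right; field; lra.
Qed.


Lemma s_mass k : SUM Sl (pw dl k) = Rr k x0.
Proof. by rewrite massR /dl sum_delta. Qed.

Lemma s_add k l : Rr (k + l) x0 = SUM Sl (fun x => pw dl k x * Rr l x).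
Proof.
rewrite -s_mass -massR; apply: eq_bigr => x _; exact: pw_add.
Qed.

Lemma dl_nn y : 0 <= dl y.
Proof. rewrite /dl; case: eqP => _; lra. Qed.

Section Fek.
Variables (a b : R).
Hypotheses (ha : 0 < a) (ha1 : a <= 1) (hb1 : 1 <= b)
  (hab : forall l x, x \in Sl -> a * Rr l x0 <= Rr l x <= b * Rr l x0).

Definition sk k := Rr k x0.
Definition uk k := ln (sk k).

Lemma sk_pos k : 0 < sk k.
Proof. exact: Rr_pos. Qed.

Lemma s_mul k l : a * sk k * sk l <= sk (k + l) <= b * sk k * sk l.
Proof.
rewrite /sk s_add; split.
  rewrite -s_mass -sum_scal -sum_scalr; apply: sum_le => x hx.
  have := proj1 (hab l hx); have := pw_nn k x dl_nn => h1 h2.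
  have -> : a * pw dl k x * Rr l x0 = pw dl k x * (a * Rr l x0) by ring.
  by apply: Rmult_le_compat_l.
rewrite -s_mass -sum_scal -sum_scalr; apply: sum_le => x hx.
have := proj2 (hab l hx); have := pw_nn k x dl_nn => h1 h2.
have -> : b * pw dl k x * Rr l x0 = pw dl k x * (b * Rr l x0) by ring.
by apply: Rmult_le_compat_l.
Qed.

Lemma u_add k l : uk (k + l) <= uk k + uk l + ln b /\ uk k + uk l + ln a <= uk (k + l).
Proof.
have [h1 h2] := s_mul k l.
have hk := sk_pos k; have hl := sk_pos l.
have hb : 0 < b by lra.
have hp1 : 0 < a * sk k by apply: Rmult_lt_0_compat.
have hp2 : 0 < b * sk k by apply: Rmult_lt_0_compat.
have hp3 : 0 < a * sk k * sk l by apply: Rmult_lt_0_compat.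
split.
  have := ln_le' (sk_pos _) h2.
  rewrite ln_mult // ln_mult // /uk; lra.
have := ln_le' hp3 h1.
rewrite ln_mult // ln_mult // /uk; lra.
Qed.

Lemma lnb_nn : 0 <= ln b.
Proof. rewrite -ln_1; apply: ln_le'; lra. Qed.
Lemma lna_np : ln a <= 0.
Proof. rewrite -ln_1; apply: ln_le'; lra. Qed.

Lemma u_iter_ub m k : uk (m.+1 * k) + ln b <= INR m.+1 * (uk k + ln b).
Proof.
elim: m => [|m IH]; first by rewrite mul1n /=; lra.
rewrite mulSn addnC; have := proj1 (u_add (m.+1 * k) k).
rewrite (S_INR m.+1); lra.
Qed.

Lemma u_iter_lb m k : INR m.+1 * (uk k + ln a) <= uk (m.+1 * k) + ln a.
Proof.
elim: m => [|m IH]; first by rewrite mul1n /=; lra.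
rewrite mulSn addnC; have := proj2 (u_add (m.+1 * k) k).
rewrite (S_INR m.+1); lra.
Qed.

Lemma u_lb k : INR k * ln (Q x0 x0) <= uk k.
Proof.
rewrite -ln_pow; last exact: Qpos.
apply: ln_le'; [apply: pow_lt; exact: Qpos | exact: Rr_lb].
Qed.

Lemma u_ub k : uk k <= INR k * ln (1 - th).
Proof.
rewrite -ln_pow; last exact: one_m_th.
apply: ln_le'; [exact: sk_pos | exact: Rr_ub].
Qed.

Definition Eset := fun z => exists j : nat, z = - (uk j.+1 + ln b) / INR j.+1.

Lemma Eset_bound : bound Eset.
Proof.
exists (- ln (Q x0 x0)) => z [j ->].
have hj : 0 < INR j.+1 by apply: lt_0_INR; lia.
have := u_lb j.+1; have := lnb_nn => h1 h2.
apply: Rmult_le_reg_r (hj) _.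
have -> : - (uk j.+1 + ln b) / INR j.+1 * INR j.+1 = - (uk j.+1 + ln b) by field; lra.
nra.
Qed.

Lemma Eset_ne : exists z, Eset z.
Proof. by exists (- (uk 1 + ln b) / INR 1), 0%nat. Qed.

Definition Lrate := - proj1_sig (completeness _ Eset_bound Eset_ne).

Lemma L_lb k : INR k * Lrate - ln b <= uk k.
Proof.
case: k => [|j].
  rewrite /uk /sk /= ln_1; have := lnb_nn; lra.
have hj : 0 < INR j.+1 by apply: lt_0_INR; lia.
have hl := proj2_sig (completeness _ Eset_bound Eset_ne).
have := proj1 hl _ (ex_intro _ j erefl).
rewrite /Lrate; set lu := proj1_sig _ => h.
have : - (uk j.+1 + ln b) <= lu * INR j.+1.
  have := Rmult_le_compat_r _ _ _ (Rlt_le _ _ hj) h.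
  have -> : - (uk j.+1 + ln b) / INR j.+1 * INR j.+1 = - (uk j.+1 + ln b) by field; lra.
  done.
nra.
Qed.

Lemma L_ub k : uk k <= INR k * Lrate - ln a.
Proof.
case: k => [|j].
  rewrite /uk /sk /= ln_1; have := lna_np; lra.
have hj : 0 < INR j.+1 by apply: lt_0_INR; lia.
have hl := proj2_sig (completeness _ Eset_bound Eset_ne).
rewrite /Lrate; set lu := proj1_sig _ in hl *.
have : lu <= - ((uk j.+1 + ln a) / INR j.+1).
  apply: (proj2 hl) => z [i ->].
  have hi : 0 < INR i.+1 by apply: lt_0_INR; lia.
  suff : (uk j.+1 + ln a) / INR j.+1 <= (uk i.+1 + ln b) / INR i.+1.
    have -> : - (uk i.+1 + ln b) / INR i.+1 = - ((uk i.+1 + ln b) / INR i.+1) by field; lra.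
    lra.
  apply: div_cross => //.
  have h1 := u_iter_lb i j.+1.
  have h2 := u_iter_ub j i.+1.
  have := lna_np; have := lnb_nn.
  rewrite mulnC in h2. lra.
move=> h.
have : (uk j.+1 + ln a) / INR j.+1 <= - lu by lra.
move=> h2; have := Rmult_le_compat_r _ _ _ (Rlt_le _ _ hj) h2.
have -> : (uk j.+1 + ln a) / INR j.+1 * INR j.+1 = uk j.+1 + ln a by field; lra.
lra.
Qed.

Definition rho := exp Lrate.

Lemma rho_pos : 0 < rho.
Proof. exact: exp_pos. Qed.

Lemma ln_rho_pow k : ln (rho ^ k) = INR k * Lrate.
Proof. by rewrite ln_pow ?ln_exp //; exact: rho_pos. Qed.

Lemma sk_ge k : rho ^ k / b <= sk k.
Proof.
have hp := pow_lt _ k rho_pos.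
apply: ln_le_inv; [apply: Rdiv_lt_0_compat; lra | exact: sk_pos |].
rewrite /Rdiv ln_mult ?ln_Rinv ?ln_rho_pow; try lra; try (apply: Rinv_0_lt_compat; lra).
have := L_lb k; rewrite /uk; lra.
Qed.

Lemma sk_le k : sk k <= rho ^ k / a.
Proof.
have hp := pow_lt _ k rho_pos.
apply: ln_le_inv; [exact: sk_pos | apply: Rdiv_lt_0_compat; lra |].
rewrite /Rdiv ln_mult ?ln_Rinv ?ln_rho_pow; try lra; try (apply: Rinv_0_lt_compat; lra).
have := L_ub k; rewrite /uk; lra.
Qed.

Lemma rho_ge_c : Q x0 x0 <= rho.
Proof.
have hc := Qpos x0S x0S.
have : ln (Q x0 x0) - Lrate <= 0.
  apply: (arch_le (M := - ln a)) => k.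
  have := u_lb k; have := L_ub k; nra.
move=> h; rewrite -(exp_ln _ hc); apply: exp_le'; lra.
Qed.

Lemma rho_le : rho <= 1 - th.
Proof.
have hc := one_m_th.
have : Lrate - ln (1 - th) <= 0.
  apply: (arch_le (M := ln b)) => k.
  have := u_ub k; have := L_lb k; nra.
move=> h; rewrite -(exp_ln _ hc); apply: exp_le'; lra.
Qed.

End Fek.


Lemma sum_ord_le n (F1 F2 : 'I_n -> R) : (forall i, F1 i <= F2 i) ->
  \big[Rplus/0]_(i < n) F1 i <= \big[Rplus/0]_(i < n) F2 i.
Proof.
move=> H; apply: (big_ind2 (fun x y => x <= y)); first lra.
  by move=> *; apply: Rplus_le_compat.
by move=> i _; apply: H.
Qed.

Lemma sum_ord_nn n (F : 'I_n -> R) : (forall i, 0 <= F i) -> 0 <= \big[Rplus/0]_(i < n) F i.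
Proof.
move=> H; apply: (big_ind (fun x => 0 <= x)); first lra.
  by move=> *; apply: Rplus_le_le_0_compat.
by move=> i _; apply: H.
Qed.

Lemma finite_qsd eta : 0 < eta -> exists rh (nu : T -> R),
  Q x0 x0 <= rh <= 1 - th /\ (forall y, 0 <= nu y) /\ (forall y, y \notin Sl -> nu y = 0) /\
  SUM Sl nu = 1 /\
  forall y, y \in Sl -> Rabs (SUM Sl (fun x => nu x * Q x y) - rh * nu y) <= eta * G y.
Proof.
move=> heta.
case: ratios => a [b [ha [ha1 [hb1 hab]]]].
set rh := rho hb1.
have hrh : 0 < rh by apply: rho_pos.
have hrc : Q x0 x0 <= rh by apply: (rho_ge_c ha ha1 hb1 hab).
have hr1 : rh <= 1 - th by apply: rho_le.
have hb : 0 < b by lra.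
set X := (/ a + / G x0) * b / eta.
case: (INR_unbounded X) => n hn.
have hn1 : X < INR n.+1 by rewrite S_INR; lra.
have hX : 0 < INR n.+1 by apply: lt_0_INR; lia.
pose g k y := / rh ^ k * pw dl k y.
have hgnn : forall k y, 0 <= g k y.
  move=> k y; apply: Rmult_le_pos; first by left; apply: Rinv_0_lt_compat; apply: pow_lt.
  by apply: pw_nn; apply: dl_nn.
pose H y := \big[Rplus/0]_(k < n.+1) g k y.
have hHnn : forall y, 0 <= H y by move=> y; apply: sum_ord_nn.
pose m := SUM Sl H.
have hm : m = \big[Rplus/0]_(k < n.+1) (/ rh ^ k * sk k).
  rewrite /m /H exchange_big /=; apply: eq_bigr => k _.
  by rewrite /g sum_scal s_mass.
have hmb : INR n.+1 / b <= m.
  rewrite hm.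
  apply: Rle_trans (_ : \big[Rplus/0]_(k < n.+1) (/ b) <= _).
    by rewrite sum_ord_const; right.
  apply: sum_ord_le => k.
  have := sk_ge hb1 k; rewrite -/rh => h.
  have hp := pow_lt _ k hrh.
  apply: Rle_trans (_ : / rh ^ k * (rh ^ k / b) <= _); first by right; field; lra.
  by apply: Rmult_le_compat_l; first by left; apply: Rinv_0_lt_compat.
have hm0 : 0 < m.
  apply: Rlt_le_trans hmb; apply: Rdiv_lt_0_compat => //.
pose nu y := if y \in Sl then H y / m else 0.
exists rh, nu; split; first by split.
split.
  move=> y; rewrite /nu; case: ifP => _; last lra.
  apply: Rmult_le_pos => //; left; apply: Rinv_0_lt_compat => //.
split; first by move=> y /negbTE; rewrite /nu => ->.
split.
  rewrite (eq_big_seq (fun y => H y * / m)); last by move=> y hy; rewrite /nu hy.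
  by rewrite sum_scalr -/m; field; lra.
move=> y hy.
have e1 : SUM Sl (fun x => nu x * Q x y) = SUM Sl (fun x => H x * Q x y) / m.
  rewrite /Rdiv -sum_scalr; apply: eq_big_seq => x hx; rewrite /nu hx; field; lra.
have e2 : SUM Sl (fun x => H x * Q x y) = \big[Rplus/0]_(k < n.+1) (/ rh ^ k * pw dl k.+1 y).
  rewrite /H.
  rewrite (eq_bigr (fun x => \big[Rplus/0]_(k < n.+1) (g k x * Q x y))); last first.
    by move=> x _; rewrite (big_distrl (times := Rmult)).
  rewrite exchange_big /=; apply: eq_bigr => k _.
  by rewrite /g -sum_scal; apply: eq_bigr => x _; ring.
have e3 : \big[Rplus/0]_(k < n.+1) (/ rh ^ k * pw dl k.+1 y) = rh * (H y - dl y + g n.+1 y).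
  have w1 : \big[Rplus/0]_(k < n.+2) g k y = g 0%nat y + \big[Rplus/0]_(k < n.+1) g k.+1 y.
    rewrite big_ord_recl; congr (_ + _); apply: eq_bigr => k _; by rewrite lift0.
  have w2 : \big[Rplus/0]_(k < n.+2) g k y = H y + g n.+1 y by rewrite big_ord_recr.
  have hh : \big[Rplus/0]_(k < n.+1) g k.+1 y = / rh * \big[Rplus/0]_(k < n.+1) (/ rh ^ k * pw dl k.+1 y).
    rewrite (big_distrr (times := Rmult)); apply: eq_bigr => k _ /=.
    rewrite /g /=. have := pow_lt _ k hrh => hp. field; lra.
  have hg0 : g 0%nat y = dl y by rewrite /g /= Rinv_1 Rmult_1_l.
  have hh2 : / rh * \big[Rplus/0]_(k < n.+1) (/ rh ^ k * pw dl k.+1 y) = H y + g n.+1 y - dl y.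
    rewrite -hh; lra.
  have -> : \big[Rplus/0]_(k < n.+1) (/ rh ^ k * pw dl k.+1 y) =
        rh * (/ rh * \big[Rplus/0]_(k < n.+1) (/ rh ^ k * pw dl k.+1 y)) by field; lra.
  rewrite hh2 /H; ring.
have epw : pw dl n.+1 y <= sk n * G y.
  rewrite /= /sk -s_mass -sum_scalr; apply: sum_le => x hx.
  apply: Rmult_le_compat_l; [exact: pw_nn dl_nn | exact: QG].
have hskn := sk_le ha ha1 hb1 hab n; rewrite -/rh in hskn.
have hpn := pow_lt _ n hrh.
have hGy : 0 <= G y by have := Qnn x0 y; have := QG y x0S; lra.
have eg : rh * g n.+1 y <= G y / a.
  rewrite /g.
  have -> : rh * (/ rh ^ n.+1 * pw dl n.+1 y) = / rh ^ n * pw dl n.+1 y by rewrite /=; field; lra.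
  apply: Rle_trans (_ : / rh ^ n * (rh ^ n / a * G y) <= _); last by right; field; lra.
  apply: Rmult_le_compat_l; first by left; apply: Rinv_0_lt_compat.
  apply: Rle_trans epw _; apply: Rmult_le_compat_r => //; lra.
have edl : rh * dl y <= G y / G x0.
  rewrite /dl; case: eqP => [->|_].
    have -> : G x0 / G x0 = 1 by field; lra.
    lra.
  rewrite Rmult_0_r; apply: Rmult_le_pos => //; left; apply: Rinv_0_lt_compat => //.
have hdl := dl_nn y.
have hgn := hgnn n.+1 y.
rewrite e1 e2 e3 /nu hy.
have -> : rh * (H y - dl y + g n.+1 y) / m - rh * (H y / m) = (rh * g n.+1 y - rh * dl y) / m
  by field; lra.
rewrite /Rdiv Rabs_mult (Rabs_pos_eq (/ m)); last by left; apply: Rinv_0_lt_compat.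
have hab2 : Rabs (rh * g n.+1 y - rh * dl y) <= G y * (/ a + / G x0).
  apply: Rabs_le; split; nra.
apply: Rle_trans (_ : G y * (/ a + / G x0) / m <= _).
  apply: Rmult_le_compat_r => //; left; apply: Rinv_0_lt_compat => //.
have hia : 0 < / a by apply: Rinv_0_lt_compat.
have hig : 0 < / G x0 by apply: Rinv_0_lt_compat.
apply: Rle_trans (_ : G y * (/ a + / G x0) / (INR n.+1 / b) <= _).
  apply: Rmult_le_compat_l; first by apply: Rmult_le_pos => //; lra.
  apply: Rinv_le_contravar => //; apply: Rdiv_lt_0_compat => //.
have -> : G y * (/ a + / G x0) / (INR n.+1 / b) = G y * (X * eta / INR n.+1).
  rewrite /X; field; repeat split; lra.
rewrite Rmult_comm; apply: Rmult_le_compat_r => //.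
apply: Rle_trans (_ : INR n.+1 * eta / INR n.+1 <= _).
  apply: Rmult_le_compat_r; first by left; apply: Rinv_0_lt_compat.
  apply: Rmult_le_compat_r; lra.
right; field; lra.
Qed.
End Finite.

Lemma fact_eq j : j`! = Factorial.fact j.
Proof. elim: j => [//|j IH]; by rewrite factS IH /= mulnE. Qed.

Lemma big_sumf (f : nat -> R) J : \big[Rplus/0]_(j < J.+1) f j = sum_f_R0 f J.
Proof.
elim: J => [|J IH]; first by rewrite big_ord_recr big_ord0 /=; lra.
by rewrite big_ord_recr IH.
Qed.

Lemma sum_f_growing s : (forall i, 0 <= s i) -> Un_growing (fun n => sum_f_R0 s n).
Proof. move=> h n; rewrite /=; have := h n.+1; lra. Qed.

Lemma exp_partial x J : 0 <= x ->
  \big[Rplus/0]_(j < J) (x ^ j / INR (j`!)) <= exp x.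
Proof.
move=> hx; case: J => [|J]; first by rewrite big_ord0; left; apply: exp_pos.
rewrite (big_sumf (fun j => x ^ j / INR (j`!))).
have hcv : Un_cv (fun n => sum_f_R0 (fun i => / INR (Factorial.fact i) * x ^ i) n) (exp x).
  rewrite /exp; case: (exist_exp x) => l hl /=; exact: hl.
have hg : Un_growing (fun n => sum_f_R0 (fun i => / INR (Factorial.fact i) * x ^ i) n).
  apply: sum_f_growing => i; apply: Rmult_le_pos; last by apply: pow_le.
  left; apply: Rinv_0_lt_compat; apply: INR_fact_lt_0.
have := growing_ineq _ _ hg hcv J.
have -> : sum_f_R0 (fun j : nat => x ^ j / INR j`!) J =
          sum_f_R0 (fun i : nat => / INR (Factorial.fact i) * x ^ i) J.
  apply (PartSum.sum_eq _ _ J) => i _; rewrite fact_eq /Rdiv Rmult_comm //.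
done.
Qed.

Lemma fact_pos j : 0 < INR (j`!).
Proof. rewrite fact_eq; apply: INR_fact_lt_0. Qed.

Lemma pmf_nn lam j : 0 <= lam -> 0 <= poisson_pmf lam j.
Proof.
move=> h; rewrite /poisson_pmf; apply: Rmult_le_pos.
  apply: Rmult_le_pos; [left; exact: exp_pos | exact: pow_le].
left; apply: Rinv_0_lt_compat; exact: fact_pos.
Qed.

Lemma pmf_pos lam j : 0 < lam -> 0 < poisson_pmf lam j.
Proof.
move=> h; rewrite /poisson_pmf; apply: Rmult_lt_0_compat.
  apply: Rmult_lt_0_compat; [exact: exp_pos | exact: pow_lt].
apply: Rinv_0_lt_compat; exact: fact_pos.
Qed.

Lemma pmf_sum lam J : 0 <= lam -> \big[Rplus/0]_(j < J) poisson_pmf lam j <= 1.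
Proof.
move=> h.
have -> : \big[Rplus/0]_(j < J) poisson_pmf lam j =
          exp (- lam) * \big[Rplus/0]_(j < J) (lam ^ j / INR (j`!)).
  rewrite -sum_scal; apply: eq_bigr => j _.
  rewrite /poisson_pmf /Rdiv; ring.
have := exp_partial J h; have := exp_pos (- lam) => h1 h2.
apply: Rle_trans (_ : exp (- lam) * exp lam <= _).
  by apply: Rmult_le_compat_l; lra.
rewrite -exp_plus Rplus_opp_l exp_0; lra.
Qed.

Lemma pmf_le lam L j : 0 <= lam <= L -> poisson_pmf lam j <= L ^ j / INR (j`!).
Proof.
move=> [h1 h2]; rewrite /poisson_pmf /Rdiv.
apply: Rmult_le_compat_r; first by left; apply: Rinv_0_lt_compat; exact: fact_pos.
have he : exp (- lam) <= 1 by rewrite -exp_0; apply: exp_le'; lra.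
have hp : lam ^ j <= L ^ j by apply: pow_incr.
have := pow_le _ j h1; have := exp_pos (- lam); nra.
Qed.

Lemma prod_le k (a b : 'I_k -> R) : (forall i, 0 <= a i <= b i) ->
  0 <= \big[Rmult/1]_(i < k) a i <= \big[Rmult/1]_(i < k) b i.
Proof.
move=> H; apply: (big_ind2 (fun x y => 0 <= x <= y)); first lra.
  move=> x1 x2 y1 y2 [h1 h2] [h3 h4]; split; first exact: Rmult_le_pos.
  apply: Rmult_le_compat => //.
by move=> i _; apply: H.
Qed.

Lemma prod_nn k (a : 'I_k -> R) : (forall i, 0 <= a i) -> 0 <= \big[Rmult/1]_(i < k) a i.
Proof.
move=> H; apply: (big_ind (fun x => 0 <= x)); first lra.
  by move=> *; apply: Rmult_le_pos.
by move=> i _; apply: H.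
Qed.

Lemma prod_pos k (a : 'I_k -> R) : (forall i, 0 < a i) -> 0 < \big[Rmult/1]_(i < k) a i.
Proof.
move=> H; apply: (big_ind (fun x => 0 < x)); first lra.
  by move=> *; apply: Rmult_lt_0_compat.
by move=> i _; apply: H.
Qed.

Lemma le_sum_nat (T : eqType) (l : seq T) (f : T -> nat) y : y \in l -> (f y <= \sum_(z <- l) f z)%N.
Proof. move=> hy; rewrite (big_rem y hy) /=; apply: leq_addr. Qed.

Lemma box_sum k (h : 'I_k -> nat -> R) (H : 'I_k -> R) (l : seq (lat k)) :
  uniq l -> (forall i j, 0 <= h i j) ->
  (forall i J, \big[Rplus/0]_(j < J) h i j <= H i) ->
  SUM l (fun y => \big[Rmult/1]_(i < k) h i (y i)) <= \big[Rmult/1]_(i < k) H i.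
Proof.
move=> ul h0 hH.
set J := (\sum_(y <- l) \sum_(i < k) y i)%N.
pose phi (f : {ffun 'I_k -> 'I_J.+1}) : lat k := [ffun i => nat_of_ord (f i)].
pose Bx := [seq phi f | f <- index_enum {ffun 'I_k -> 'I_J.+1}].
have phi_inj : injective phi.
  move=> f g e; apply/ffunP => i; apply: val_inj.
  by have := congr1 (fun t : lat k => t i) e; rewrite /phi !ffunE.
have uB : uniq Bx by rewrite map_inj_uniq ?index_enum_uniq.
have sub : {subset l <= Bx}.
  move=> y hy.
  have hyi : forall i, (y i <= J)%N.
    move=> i; apply: leq_trans (le_sum_nat (fun z : lat k => \sum_(i < k) z i) hy).
    by rewrite (bigD1 i) //= leq_addr.
  have -> : y = phi [ffun i => inord (y i)].
    by apply/ffunP => i; rewrite /phi !ffunE inordK // ltnS.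
  apply: map_f; by rewrite mem_index_enum.
have h1 : SUM l (fun y => \big[Rmult/1]_(i < k) h i (y i)) <=
          SUM Bx (fun y => \big[Rmult/1]_(i < k) h i (y i)).
  apply: sum_mono => // y _.
  by apply: prod_nn => i.
apply: Rle_trans h1 _.
rewrite /Bx big_map.
rewrite (eq_bigr (fun f : {ffun 'I_k -> 'I_J.+1} => \big[Rmult/1]_(i < k) h i (f i))); last first.
  by move=> f _; apply: eq_bigr => i _; rewrite /phi ffunE.
rewrite -(bigA_distr_bigA (fun i (j : 'I_J.+1) => h i j)).
apply: (proj2 (prod_le _)) => i; split.
  by apply: sum_ord_nn.
exact: hH.
Qed.

Notation dpos := Pilot.Defs.pos.

Section Main.
Variables (k : nat) (F : vecR k -> vecR k) (Bd eps : R) (M0 : vecR k -> Prop).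
Hypotheses (hk : (1 <= k)%nat)
  (HFpos : forall x, nonnegv x -> forall i, 0 <= F x i)
  (HFbdd : forall x, nonnegv x -> forall i, Rabs (F x i) <= Bd)
  (HM0 : (forall x, M0 x <-> origin_set x) \/ (forall x, M0 x <-> boundary_set x))
  (HFpos_out : forall x, nonnegv x -> ~ M0 x -> forall i, 0 < F x i)
  (heps : 0 < eps).

Definition Lc := (Rabs Bd + 1) / eps.
Definition Fe (n : lat k) i := F (dpos eps n) i / eps.
Definition Gf (m : lat k) := \big[Rmult/1]_(i < k) (Lc ^ (m i) / INR ((m i)`!)).
Definition theta := \big[Rmult/1]_(i < k) exp (- Lc).
Definition Q := kernel F eps.

Lemma pos_nn (n : lat k) : nonnegv (dpos eps n).
Proof. move=> i; rewrite /dpos /Defs.pos; apply: Rmult_le_pos; [lra | exact: pos_INR]. Qed.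

Lemma Lc_pos : 0 < Lc.
Proof. rewrite /Lc; apply: Rdiv_lt_0_compat => //; have := Rabs_pos Bd; lra. Qed.

Lemma Fe_bnd (n : lat k) i : 0 <= Fe n i <= Lc.
Proof.
rewrite /Fe /Lc; have h1 := HFpos (pos_nn n) i; have h2 := HFbdd (pos_nn n) i.
have h3 : F (dpos eps n) i <= Rabs Bd + 1 by have := Rle_abs (F (dpos eps n) i); have := Rle_abs Bd; lra.
split; first by apply: Rmult_le_pos => //; left; apply: Rinv_0_lt_compat.
by apply: Rmult_le_compat_r => //; left; apply: Rinv_0_lt_compat.
Qed.

Lemma Q_nn (n m : lat k) : 0 <= Q n m.
Proof. apply: prod_nn => i; apply: pmf_nn; exact: (proj1 (Fe_bnd n i)). Qed.

Lemma Q_G (n m : lat k) : Q n m <= Gf m.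
Proof.
apply: (proj2 (prod_le _)) => i; split; first by apply: pmf_nn; exact: (proj1 (Fe_bnd n i)).
apply: pmf_le; exact: Fe_bnd.
Qed.

Lemma Q_sum (n : lat k) l : uniq l -> SUM l (Q n) <= 1.
Proof.
move=> ul.
have H1 := box_sum (h := fun i j => poisson_pmf (Fe n i) j) (H := fun _ => 1) ul
  (fun i j => pmf_nn j (proj1 (Fe_bnd n i))) (fun i J => pmf_sum J (proj1 (Fe_bnd n i))).
rewrite big1_eq in H1; exact: H1.
Qed.

Lemma G_nn (m : lat k) : 0 <= Gf m.
Proof.
apply: prod_nn => i; apply: Rmult_le_pos; first by apply: pow_le; left; exact: Lc_pos.
left; apply: Rinv_0_lt_compat; exact: fact_pos.
Qed.

Lemma G_sum l : uniq l -> SUM l Gf <= \big[Rmult/1]_(i < k) exp Lc.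
Proof.
move=> ul.
have h1 : forall (i : 'I_k) j, 0 <= Lc ^ j / INR (j`!).
  move=> i j; apply: Rmult_le_pos; first by apply: pow_le; left; exact: Lc_pos.
  left; apply: Rinv_0_lt_compat; exact: fact_pos.
have h2 : forall (i : 'I_k) J, \big[Rplus/0]_(j < J) (Lc ^ j / INR (j`!)) <= exp Lc.
  move=> i J; apply: exp_partial; left; exact: Lc_pos.
exact: (box_sum (h := fun i j => Lc ^ j / INR (j`!)) (H := fun _ => exp Lc) ul h1 h2).
Qed.

Definition inS (n : lat k) : bool :=
  if excluded_middle_informative (M0 (dpos eps n)) then false else true.

Lemma inSP n : inS n = true <-> ~ M0 (dpos eps n).
Proof.
rewrite /inS; case: excluded_middle_informative => h; split => //.
Qed.

Definition x0 : lat k := [ffun _ => 1%nat].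
Definition z0 : lat k := [ffun _ => 0%nat].

Lemma Q_pos (n m : lat k) : inS n -> 0 < Q n m.
Proof.
move=> /inSP h; apply: prod_pos => i; apply: pmf_pos.
rewrite /Fe; apply: Rdiv_lt_0_compat => //; exact: HFpos_out (pos_nn n) h i.
Qed.

Lemma theta_pos : 0 < theta.
Proof. apply: prod_pos => i; exact: exp_pos. Qed.

Lemma Q_z0 (n : lat k) : theta <= Q n z0.
Proof.
apply: (proj2 (prod_le _)) => i; split; first by left; exact: exp_pos.
rewrite /z0 ffunE /poisson_pmf /= Rmult_1_r.
rewrite /Rdiv Rinv_1 Rmult_1_r; apply: exp_le'; have := Fe_bnd n i; rewrite /Fe; lra.
Qed.

Lemma G_x0 : 0 < Gf x0.
Proof.
apply: prod_pos => i; apply: Rmult_lt_0_compat; first by apply: pow_lt; exact: Lc_pos.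
apply: Rinv_0_lt_compat; exact: fact_pos.
Qed.

Lemma x0_in : inS x0.
Proof.
apply/inSP => hM; case: HM0 => H.
  have := (proj1 (H _) hM) (Ordinal hk); rewrite /dpos /Defs.pos /x0 ffunE /=; lra.
have [_ hp] := proj1 (H _) hM.
have : 0 < \big[Rmult/1]_(i < k) dpos eps x0 i.
  apply: prod_pos => i; rewrite /dpos /Defs.pos /x0 ffunE /=; lra.
lra.
Qed.

Lemma z0_out : inS z0 = false.
Proof.
apply/negbTE/negP => /inSP; apply; case: HM0 => H; apply/H.
  by move=> i; rewrite /dpos /Defs.pos /z0 ffunE /=; ring.
split; first exact: pos_nn.
rewrite (bigD1 (Ordinal hk)) //= /dpos /Defs.pos /z0 ffunE /= Rmult_0_r Rmult_0_l //.
Qed.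


Definition SN N : seq (lat k) := undup (x0 :: [seq y <- pmap unpickle (iota 0 N) | inS y]).

Lemma SN_uniq N : uniq (SN N).
Proof. exact: undup_uniq. Qed.

Lemma SN_x0 N : x0 \in SN N.
Proof. by rewrite mem_undup mem_head. Qed.

Lemma SN_inS N y : y \in SN N -> inS y.
Proof.
rewrite mem_undup inE => /orP [/eqP ->|]; first exact: x0_in.
by rewrite mem_filter => /andP [].
Qed.

Lemma SN_big N y : inS y -> (pickle y < N)%N -> y \in SN N.
Proof.
move=> hy hN; rewrite mem_undup inE mem_filter hy /=; apply/orP; right.
rewrite mem_pmap; apply/mapP; exists (pickle y); last by rewrite pickleK.
by rewrite mem_iota add0n.
Qed.

Lemma z0_notSN N : z0 \notin SN N.
Proof. apply/negP => /SN_inS; by rewrite z0_out. Qed.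

Definition cc := Q x0 x0.
Lemma cc_pos : 0 < cc.
Proof. exact: Q_pos x0_in. Qed.

Definition goodN N (rh : R) (nu : lat k -> R) :=
  cc <= rh <= 1 - theta /\ (forall y, 0 <= nu y) /\ (forall y, y \notin SN N -> nu y = 0) /\
  SUM (SN N) nu = 1 /\
  forall y, y \in SN N -> Rabs (SUM (SN N) (fun x => nu x * Q x y) - rh * nu y) <= / INR N.+1 * Gf y.

Lemma goodN_ex N : exists p : R * (lat k -> R), goodN N p.1 p.2.
Proof.
have hQs : forall x, x \in SN N -> SUM (SN N) (Q x) <= 1 - theta.
  move=> x hx.
  have u : uniq (z0 :: SN N) by rewrite /= z0_notSN SN_uniq.
  have h2 : Q x z0 + SUM (SN N) (Q x) <= 1.
    have := Q_sum x u; rewrite big_cons => h; exact: h.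
  have := Q_z0 x; lra.
have heta : 0 < / INR N.+1 by apply: Rinv_0_lt_compat; apply: lt_0_INR; lia.
have := finite_qsd (SN_uniq N) (SN_x0 N) (fun x y hx _ => Q_pos y (SN_inS hx)) Q_nn
  (fun x y _ => Q_G x y) G_x0 hQs theta_pos heta.
move=> [rh [nu H]]; by exists (rh, nu).
Qed.

Definition pN N := proj1_sig (constructive_indefinite_description _ (goodN_ex N)).
Definition rhN N := (pN N).1.
Definition nuN N := (pN N).2.
Lemma goodN_pN N : goodN N (rhN N) (nuN N).
Proof. exact: proj2_sig (constructive_indefinite_description _ (goodN_ex N)). Qed.

Definition D y := 2 * Gf y / cc.

Lemma D_nn y : 0 <= D y.
Proof.
rewrite /D; apply: Rmult_le_pos; last by left; apply: Rinv_0_lt_compat; exact: cc_pos.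
have := G_nn y; lra.
Qed.

Lemma Q_le1 x y : Q x y <= 1.
Proof. have := Q_sum x (l := [:: y]) isT; rewrite big_cons big_nil; lra. Qed.

Lemma nuN_le N y : nuN N y <= D y.
Proof.
have [[hc hr] [hnn [hz [hs he]]]] := goodN_pN N.
case: (boolP (y \in SN N)) => hy; last by rewrite hz //; exact: D_nn.
have h1 := he y hy.
have h2 : SUM (SN N) (fun x => nuN N x * Q x y) <= Gf y.
  apply: Rle_trans (_ : SUM (SN N) (fun x => nuN N x * Gf y) <= _).
    apply: sum_le => x _; apply: Rmult_le_compat_l => //; exact: Q_G.
  rewrite sum_scalr hs; lra.
have h3 : / INR N.+1 <= 1.
  rewrite -Rinv_1; apply: Rinv_le_contravar; first lra.
  have := pos_INR N; rewrite S_INR; lra.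
have hG := G_nn y.
have hcp := cc_pos.
have h4 : rhN N * nuN N y <= 2 * Gf y.
  have : / INR N.+1 * Gf y <= Gf y by nra.
  have := Rle_abs (rhN N * nuN N y - SUM (SN N) (fun x => nuN N x * Q x y)).
  rewrite Rabs_minus_sym. lra.
have h5 : cc * nuN N y <= 2 * Gf y by have := hnn y; nra.
rewrite /D; apply: (Rmult_le_reg_l cc) => //.
have -> : cc * (2 * Gf y / cc) = 2 * Gf y by field; lra.
done.
Qed.

Definition fc N m := match m with 0%nat => rhN N
  | j.+1 => match unpickle j with Some y => nuN N y | None => 0 end end.
Definition Kc m := match m with 0%nat => 1
  | j.+1 => match unpickle j with Some y => D y | None => 0 end end.

Lemma fc_bnd N m : 0 <= fc N m <= Kc m.
Proof.
have [[hc hr] [hnn _]] := goodN_pN N.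
case: m => [|j] /=.
  have := cc_pos; have := theta_pos; lra.
case: (unpickle j) => [y|]; last lra.
split; [exact: hnn | exact: nuN_le].
Qed.

Definition ell := proj1_sig (constructive_indefinite_description _ (cluster fc_bnd)).
Lemma ellP : forall M d, 0 < d -> forall n0, exists N,
  (n0 <= N)%N /\ forall m, (m < M)%N -> Rabs (fc N m - ell m) < d.
Proof. exact: proj2_sig (constructive_indefinite_description _ (cluster fc_bnd)). Qed.

Definition lam := ell 0.
Definition mu (y : lat k) := ell (pickle y).+1.

Lemma approx (l : seq (lat k)) d n0 : 0 < d -> exists N, (n0 <= N)%N /\
  Rabs (rhN N - lam) < d /\ forall y, y \in l -> Rabs (nuN N y - mu y) < d.
Proof.
move=> hd; case: (ellP (\sum_(y <- l) pickle y).+2 hd n0) => N [hN H].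
exists N; split => //; split; first exact: (H 0%nat).
move=> y hy; have := H (pickle y).+1.
rewrite /fc pickleK; apply; rewrite !ltnS; exact: (le_sum_nat _ hy).
Qed.

Lemma bigN d (K : seq (lat k)) : 0 < d -> exists n0, forall N, (n0 <= N)%N ->
  / INR N.+1 <= d /\ forall y, y \in K -> inS y -> y \in SN N.
Proof.
move=> hd; case: (INR_unbounded (/ d)) => n hn.
exists (maxn n (\sum_(y <- K) pickle y).+1) => N hN; split.
  have hnN : (n <= N)%N by apply: leq_trans hN; apply: leq_maxl.
  have : INR n <= INR N by apply: le_INR; apply/leP.
  move=> h; have hpos : 0 < INR N.+1 by apply: lt_0_INR; lia.
  rewrite S_INR in hpos *.
  have hd' : 0 < / d by apply: Rinv_0_lt_compat.
  rewrite -(Rinv_inv d); apply: Rinv_le_contravar => //; lra.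
move=> y hy hyS; apply: SN_big => //.
apply: leq_trans (_ : (\sum_(y <- K) pickle y).+1 <= N)%N; first by rewrite ltnS; exact: (le_sum_nat _ hy).
by apply: leq_trans hN; apply: leq_maxr.
Qed.

Lemma le_eps x y C : 0 <= C -> (forall d, 0 < d -> d <= 1 -> x <= y + C * d) -> x <= y.
Proof.
move=> hC H; apply: Rnot_lt_le => hlt.
set d := Rmin 1 ((x - y) / (2 * (C + 1))).
have hd : 0 < d by apply: Rmin_pos; [lra | apply: Rdiv_lt_0_compat; lra].
have hd1 : d <= 1 by apply: Rmin_l.
have hd2 : d <= (x - y) / (2 * (C + 1)) by apply: Rmin_r.
have := H d hd hd1.
have : C * d <= (C + 1) * d by nra.
have : (C + 1) * d <= (x - y) / 2.
  apply: Rle_trans (_ : (C + 1) * ((x - y) / (2 * (C + 1))) <= _).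
    apply: Rmult_le_compat_l; lra.
  right; field; lra.
lra.
Qed.

Lemma support_sum (l S : seq (lat k)) f : uniq l -> uniq S -> (forall y, 0 <= f y) ->
  (forall y, y \notin S -> f y = 0) -> SUM l f <= SUM S f.
Proof.
move=> ul uS f0 fz.
rewrite (sum_split_pred l f (fun y => y \in S)).
rewrite (sum_const0 (l := [seq x <- l | ~~ (x \in S)])); last first.
  by move=> y; rewrite mem_filter => /andP [/fz ->].
rewrite Rplus_0_r; apply: sum_mono => //; first by apply: filter_uniq.
by move=> y; rewrite mem_filter => /andP [].
Qed.

Lemma D_total : exists TD, has_sum (fun _ => True) D TD.
Proof.
case: (hs_exists (P := fun _ : lat k => True) (f := D) (M := 2 / cc * \big[Rmult/1]_(i < k) exp Lc)).
  move=> l ul _.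
  rewrite (eq_bigr (fun y => 2 / cc * Gf y)); last by move=> y _; rewrite /D /Rdiv; ring.
  rewrite sum_scal; apply: Rmult_le_compat_l; last exact: G_sum.
  apply: Rmult_le_pos; [lra | left; apply: Rinv_0_lt_compat; exact: cc_pos].
move=> TD [h _]; by exists TD.
Qed.

Lemma tailD d : 0 < d -> exists K : seq (lat k), uniq K /\
  forall l, uniq l -> (forall y, y \in l -> y \notin K) -> SUM l D <= d.
Proof.
move=> hd; case: D_total => TD hT.
case: (hs_tail hT D_nn hd) => K [uK [_ H]].
exists K; split => // l ul hl; exact: H l ul (fun _ _ => I) hl.
Qed.

Lemma split_K (S K : seq (lat k)) f : uniq S -> uniq K -> (forall y, 0 <= f y) ->
  (forall y, f y <= D y) -> forall d, (forall l, uniq l -> (forall y, y \in l -> y \notin K) -> SUM l D <= d) ->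
  SUM S f <= SUM K f + d.
Proof.
move=> uS uK f0 fD d H.
rewrite (sum_split_pred S f (fun y => y \in K)).
have h1 : SUM [seq x <- S | x \in K] f <= SUM K f.
  apply: sum_mono => //; first exact: filter_uniq.
  by move=> y; rewrite mem_filter => /andP [].
have h2 : SUM [seq x <- S | ~~ (x \in K)] f <= d.
  apply: Rle_trans (_ : SUM [seq x <- S | ~~ (x \in K)] D <= _).
    by apply: sum_le => y _.
  apply: H; first exact: filter_uniq.
  by move=> y; rewrite mem_filter => /andP [].
lra.
Qed.

Lemma mu_nn y : 0 <= mu y.
Proof.
apply: Rnot_lt_le => hlt.
case: (approx [:: y] 0%nat (ltac:(lra) : 0 < - mu y)) => N [_ [_ H]].
have := H y (mem_head _ _); have [_ [hnn _]] := goodN_pN N; have := hnn y.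
move=> h1 h2; have := Rle_abs (nuN N y - mu y); lra.
Qed.

Lemma mu_out y : inS y = false -> mu y = 0.
Proof.
move=> hy; apply: NNPP => hne.
have hd : 0 < Rabs (mu y) by apply: Rabs_pos_lt.
case: (approx [:: y] 0%nat hd) => N [_ [_ H]].
have := H y (mem_head _ _).
have [_ [_ [hz _]]] := goodN_pN N.
rewrite hz; last by apply/negP => /SN_inS; rewrite hy.
rewrite Rminus_0_l Rabs_Ropp; lra.
Qed.

Lemma lam_bnd : cc <= lam <= 1 - theta.
Proof.
split; apply: Rnot_lt_le => hlt.
  have hd : 0 < cc - lam by lra.
  case: (approx [::] 0%nat hd) => N [_ [H _]].
  have [[hc _] _] := goodN_pN N; have := Rle_abs (rhN N - lam); lra.
have hd : 0 < lam - (1 - theta) by lra.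
case: (approx [::] 0%nat hd) => N [_ [H _]].
have [[_ hc] _] := goodN_pN N; have := Rle_abs (lam - rhN N); rewrite Rabs_minus_sym; lra.
Qed.

Lemma nu_mu N y d : Rabs (nuN N y - mu y) < d -> Rabs (mu y) <= D y + d.
Proof.
move=> h; rewrite Rabs_pos_eq; last exact: mu_nn.
have := nuN_le N y; have := Rle_abs (mu y - nuN N y); rewrite Rabs_minus_sym; lra.
Qed.

Lemma mass : has_sum (fun _ => True) mu 1.
Proof.
apply: hs_intro.
  move=> l ul _; apply: (le_eps (C := INR (size l))); first exact: pos_INR.
  move=> d hd _.
  case: (approx l 0%nat hd) => N [_ [_ H]].
  have [_ [hnn [hz [hs _]]]] := goodN_pN N.
  have hh : forall x, x \in l -> Rabs (mu x - nuN N x) <= d.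
    by move=> x hx; rewrite Rabs_minus_sym; left; exact: H x hx.
  have h1 : Rabs (SUM l mu - SUM l (nuN N)) <= INR (size l) * d by exact: sum_abs_le hh.
  have h2 : SUM l (nuN N) <= 1 by rewrite -hs; apply: support_sum => //; exact: SN_uniq.
  have := Rle_abs (SUM l mu - SUM l (nuN N)); lra.
move=> M HM; apply: (le_eps (C := 3)); first lra.
move=> d hd _.
case: (tailD hd) => K [uK HK].
have hd2 : 0 < d / INR (size K).+1 by apply: Rdiv_lt_0_compat => //; apply: lt_0_INR; lia.
case: (approx K 0%nat hd2) => N [_ [_ H]].
have [_ [hnn [hz [hs _]]]] := goodN_pN N.
have h1 := split_K (SN_uniq N) uK hnn (nuN_le N) HK.
have hh : forall x, x \in K -> Rabs (nuN N x - mu x) <= d / INR (size K).+1.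
  by move=> x hx; left; exact: H x hx.
have h2 : Rabs (SUM K (nuN N) - SUM K mu) <= INR (size K) * (d / INR (size K).+1).
  exact: sum_abs_le hh.
have h3 : INR (size K) * (d / INR (size K).+1) <= d.
  have hp : 0 < INR (size K).+1 by apply: lt_0_INR; lia.
  apply: Rle_trans (_ : INR (size K).+1 * (d / INR (size K).+1) <= _).
    apply: Rmult_le_compat_r; [lra | rewrite S_INR; lra].
  right; field; lra.
have h4 : SUM K mu <= M by exact: HM K uK (fun _ _ => I).
have := Rle_abs (SUM K (nuN N) - SUM K mu); lra.
Qed.

Lemma eigen_bound N y d : Rabs (rhN N - lam) < d -> Rabs (nuN N y - mu y) < d -> d <= 1 ->
  Rabs (rhN N * nuN N y - lam * mu y) <= d * (D y + 2).
Proof.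
move=> h1 h2 hd.
have [[hc hr] _] := goodN_pN N.
have hm := nu_mu h2.
have ht := theta_pos.
have -> : rhN N * nuN N y - lam * mu y = rhN N * (nuN N y - mu y) + (rhN N - lam) * mu y by ring.
apply: Rle_trans; first apply: Rabs_triang.
rewrite !Rabs_mult.
have hrp : Rabs (rhN N) <= 1 by rewrite Rabs_pos_eq; have := cc_pos; lra.
have := Rabs_pos (nuN N y - mu y); have := Rabs_pos (rhN N - lam); have := Rabs_pos (mu y).
have := Rabs_pos (rhN N); have := D_nn y.
nra.
Qed.

Lemma eigen y : inS y -> has_sum (fun _ => True) (fun x => mu x * Q x y) (lam * mu y).
Proof.
move=> hy.
have hlb := lam_bnd; have hcc := cc_pos; have hth := theta_pos.
apply: hs_intro.
  move=> l ul _; apply: (le_eps (C := INR (size l) + (D y + 2) + Gf y)).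
    have := pos_INR (size l); have := D_nn y; have := G_nn y; lra.
  move=> d hd hd1.
  case: (bigN [:: y] hd) => n0 Hn0.
  case: (approx (y :: l) n0 hd) => N [hN [Hr H]].
  have [Heta HS] := Hn0 N hN.
  have hyN : y \in SN N by apply: HS => //; exact: mem_head.
  have [_ [hnn [hz [hs he]]]] := goodN_pN N.
  have h1 : Rabs (SUM l (fun x => mu x * Q x y) - SUM l (fun x => nuN N x * Q x y)) <= INR (size l) * d.
    apply: sum_abs_le => x hx.
    have -> : mu x * Q x y - nuN N x * Q x y = (mu x - nuN N x) * Q x y by ring.
    rewrite Rabs_mult (Rabs_pos_eq (Q x y)); last exact: Q_nn.
    have := H x (ltac:(by rewrite inE hx orbT)); rewrite Rabs_minus_sym => h.
    have := Q_le1 x y; have := Q_nn x y; have := Rabs_pos (mu x - nuN N x); nra.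
  have h2 : SUM l (fun x => nuN N x * Q x y) <= SUM (SN N) (fun x => nuN N x * Q x y).
    apply: support_sum => //; first exact: SN_uniq.
      by move=> x; apply: Rmult_le_pos => //; exact: Q_nn.
    by move=> x hx; rewrite hz // Rmult_0_l.
  have h3 := he y hyN.
  have h4 := eigen_bound Hr (H y (mem_head _ _)) hd1.
  have h5 : / INR N.+1 * Gf y <= d * Gf y by apply: Rmult_le_compat_r => //; exact: G_nn.
  have := Rle_abs (SUM l (fun x => mu x * Q x y) - SUM l (fun x => nuN N x * Q x y)).
  have := Rle_abs (SUM (SN N) (fun x => nuN N x * Q x y) - rhN N * nuN N y).
  have := Rle_abs (rhN N * nuN N y - lam * mu y).
  lra.
move=> U HU; apply: (le_eps (C := D y + 2 + Gf y + 2)).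
  have := D_nn y; have := G_nn y; lra.
move=> d hd hd1.
case: (tailD hd) => K [uK HK].
have hd2 : 0 < d / INR (size K).+1 by apply: Rdiv_lt_0_compat => //; apply: lt_0_INR; lia.
case: (bigN [:: y] hd) => n0 Hn0.
case: (approx (y :: K) n0 hd2) => N [hN [Hr H]].
have [Heta HS] := Hn0 N hN.
have hyN : y \in SN N by apply: HS => //; exact: mem_head.
have [_ [hnn [hz [hs he]]]] := goodN_pN N.
have hp : 0 < INR (size K).+1 by apply: lt_0_INR; lia.
have hd21 : d / INR (size K).+1 <= d.
  apply: Rle_trans (_ : d / 1 <= _); last lra.
  apply: Rmult_le_compat_l; first lra.
  apply: Rinv_le_contravar; first lra. rewrite S_INR; have := pos_INR (size K); lra.
have h3 := he y hyN.
have h4 := eigen_bound Hr (H y (mem_head _ _)) (ltac:(lra) : d / INR (size K).+1 <= 1).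
have h5 : / INR N.+1 * Gf y <= d * Gf y by apply: Rmult_le_compat_r => //; exact: G_nn.
have h6 := split_K (f := fun x => nuN N x * Q x y) (SN_uniq N) uK
  (fun x => Rmult_le_pos _ _ (hnn x) (Q_nn x y))
  (fun x => Rle_trans _ _ _ (ltac:(have := Q_le1 x y; have := hnn x; have := Q_nn x y; nra) : nuN N x * Q x y <= nuN N x) (nuN_le N x)) HK.
have h7 : Rabs (SUM K (fun x => nuN N x * Q x y) - SUM K (fun x => mu x * Q x y))
    <= INR (size K) * (d / INR (size K).+1).
  apply: sum_abs_le => x hx.
  have -> : nuN N x * Q x y - mu x * Q x y = (nuN N x - mu x) * Q x y by ring.
  rewrite Rabs_mult (Rabs_pos_eq (Q x y)); last exact: Q_nn.
  have := H x (ltac:(by rewrite inE hx orbT)) => h.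
  have := Q_le1 x y; have := Q_nn x y; have := Rabs_pos (nuN N x - mu x); nra.
have h8 : INR (size K) * (d / INR (size K).+1) <= d.
  apply: Rle_trans (_ : INR (size K).+1 * (d / INR (size K).+1) <= _).
    apply: Rmult_le_compat_r; [lra | rewrite S_INR; lra].
  right; field; lra.
have h9 : SUM K (fun x => mu x * Q x y) <= U by exact: HU K uK (fun _ _ => I).
have h10 : d / INR (size K).+1 * (D y + 2) <= d * (D y + 2).
  apply: Rmult_le_compat_r => //; have := D_nn y; lra.
have := Rle_abs (SUM K (fun x => nuN N x * Q x y) - SUM K (fun x => mu x * Q x y)).
have := Rle_abs (rhN N * nuN N y - SUM (SN N) (fun x => nuN N x * Q x y)).
rewrite Rabs_minus_sym.
have := Rle_abs (lam * mu y - rhN N * nuN N y); rewrite Rabs_minus_sym.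
lra.
Qed.

Lemma main_qsd : exists (mu0 : lat k -> R) (lam0 : R), is_QSD F eps M0 mu0 lam0.
Proof.
exists mu, lam.
have hlb := lam_bnd; have hcc := cc_pos; have hth := theta_pos.
split; first exact: mu_nn.
split.
  move=> n hn; apply: mu_out; case E: (inS n) => //; move/inSP: E => E; by case: (E hn).
split; first exact: mass.
split; first lra.
move=> Gam hGam.
have hq : forall n, exists qn, has_sum Gam (Q n) qn.
  move=> n; case: (hs_exists (P := Gam) (f := Q n) (M := 1)) => [l ul _|qn [h _]].
    exact: Q_sum.
  by exists qn.
pose q n := proj1_sig (constructive_indefinite_description _ (hq n)).
have hqP : forall n, has_sum Gam (Q n) (q n).
  move=> n; exact: proj2_sig (constructive_indefinite_description _ (hq n)).
case: (hs_exists (P := Gam) (f := mu) (M := 1)) => [l ul _|b [hb _]].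
  exact: (hs_ub mass ul (fun _ _ => I)).
exists q, (lam * b), b.
split; first exact: hqP.
split; last by split.
apply: (@fubini _ (fun _ => True) Gam (fun x y => mu x * Q x y) (fun n => mu n * q n) (fun y => lam * mu y) (lam * b)).
- move=> x y; apply: Rmult_le_pos; [exact: mu_nn | exact: Q_nn].
- move=> x _; exact: hs_scale (mu_nn x) (hqP x).
- move=> y hy; apply: eigen; apply/inSP; exact: hGam y hy.
- apply: hs_scale => //; lra.
Qed.
End Main.

Theorem mainTheorem17 (k : nat) (hk : (1 <= k)%nat) (F : vecR k -> vecR k)
  (HFpos : forall x, nonnegv x -> forall i, 0 <= F x i)
  (HFbdd : exists B : R, forall x, nonnegv x -> forall i, Rabs (F x i) <= B)
  (M0 : vecR k -> Prop)
  (HM0 : (forall x, M0 x <-> origin_set x) \/ (forall x, M0 x <-> boundary_set x))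
  (HFpos_out : forall x, nonnegv x -> ~ M0 x -> forall i, 0 < F x i) :
  forall eps : R, 0 < eps -> absorbing F eps M0 ->
    exists (mu : lat k -> R) (lam : R), is_QSD F eps M0 mu lam.
Proof.
move=> eps heps _.
case: HFbdd => B hB.
exact: (main_qsd hk HFpos hB HM0 HFpos_out heps).
Qed.
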